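(* Consider the discrete Motsch–Tadmor model (as in the context) with initial data satisfying $\|\Delta^x(0)\|_F<M$ and $\|\Delta^v(0)\|_F<\kappa\int_{\|\Delta^x(0)\|_F}^M\psi(s)\,ds$, and let $C\in(0,1)$. Then for all sufficiently small $h>0$, the solution $(X(n),V(n))_{n\ge0}$ with time-step $h$ has the property that for every $i\in\{1,\dots,N\}$ the limit $v_i^\infty:=\lim_{n\to\infty}v_i(n)$ exists, $\|v_i^\infty\|<\infty$, and for all $n\ge0$ \[ \|v_i^\infty-v_i(n)\|\le\frac{h\kappa\sqrt{N}\,\|\Delta^v(0)\|_F\,e^{-C\kappa\psi(M)hn}}{1-e^{-C\kappa\psi(M)h}} . \]
   Context: Discrete MT model: fix $N\ge1$, $d\ge1$, $\kappa>0$, $h>0$, and $a:[0,\infty)\to\mathbb{R}$ with constants $0<c_1\le c_2$, $c_1\le a\le c_2$, $|a(r_1)-a(r_2)|\le L_a|r_1-r_2|$ ($L_a>0$); $0<h<\min\{1,1/\kappa\}$. A solution satisfies $x_i(n+1)=x_i(n)+hv_i(n)$, $v_i(n+1)=v_i(n)+h\kappa\sum_j\phi_{ij}(n)(v_j(n)-v_i(n))$, $\phi_{ij}(n)=\frac{a(\|x_i(n)-x_j(n)\|)}{\sum_ka(\|x_i(n)-x_k(n)\|)}$, $x_i(n),v_i(n)\in\mathbb{R}^d$. Notation: $\|\Delta^x(n)\|_F=(\sum_{i,j}\|x_i(n)-x_j(n)\|^2)^{1/2}$, $\|\Delta^v(n)\|_F=(\sum_{i,j}\|v_i(n)-v_j(n)\|^2)^{1/2}$;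 $\|\phi\|_{\mathrm{Lip}}=\frac{L_a}{Nc_1}(1+\frac{c_2}{c_1})$, $M=\frac{1}{4N\|\phi\|_{\mathrm{Lip}}}$, $\psi(s)=1-\|\phi\|_{\mathrm{Lip}}Ns$. *)

(* Defs.v *)
From HB Require Import structures.
From mathcomp Require Import all_boot all_order all_algebra.
From mathcomp Require Import all_classical all_reals all_analysis.
Set Implicit Arguments. Unset Strict Implicit. Unset Printing Implicit Defensive.
Import Order.TTheory GRing.Theory Num.Theory.
Import numFieldNormedType.Exports.
Local Open Scope classical_set_scope.
Local Open Scope ring_scope.

Section MT.
Variables (R : realType) (N d : nat).

Definition enorm (x : 'rV[R]_d) : R := Num.sqrt (\sum_(k < d) x ord0 k ^+ 2).

(* Frobenius norm of the difference matrix: (sum_{i,j} ||y_i - y_j||^2)^(1/2) *)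
Definition DeltaF (Y : 'I_N -> 'rV[R]_d) : R :=
  Num.sqrt (\sum_(i < N) \sum_(j < N) enorm (Y i - Y j) ^+ 2).

Definition mt_phi (a : R -> R) (X : 'I_N -> 'rV[R]_d) (i j : 'I_N) : R :=
  a (enorm (X i - X j)) / \sum_(k < N) a (enorm (X i - X k)).

Definition is_MT_solution (a : R -> R) (kappa h : R)
  (x v : nat -> 'I_N -> 'rV[R]_d) : Prop :=
  forall n i,
    x n.+1 i = x n i + h *: v n i /\
    v n.+1 i = v n i + (h * kappa) *:
                 \sum_(j < N) mt_phi a (x n) i j *: (v n j - v n i).

Definition phiLip (c1 c2 La : R) : R := La / (N%:R * c1) * (1 + c2 / c1).
Definition Mconst (c1 c2 La : R) : R := 1 / (4 * N%:R * phiLip c1 c2 La).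
Definition psi (c1 c2 La : R) (s : R) : R := 1 - phiLip c1 c2 La * N%:R * s.

End MT.

(* Main.v *)
Require Import Defs.
From HB Require Import structures.
From mathcomp Require Import all_boot all_order all_algebra.
From mathcomp Require Import all_classical all_reals all_analysis.
From mathcomp Require Import ring lra.
Set Implicit Arguments. Unset Strict Implicit. Unset Printing Implicit Defensive.
Import Order.TTheory GRing.Theory Num.Theory.
Import numFieldNormedType.Exports.
Local Open Scope classical_set_scope.
Local Open Scope ring_scope.

Section Aux.
Variable R : realType.

Lemma CS (T : finType) (f g : T -> R) :
  (\sum_t f t * g t) ^+ 2 <= (\sum_t f t ^+ 2) * (\sum_t g t ^+ 2).
Proof.
set A := \sum_t f t ^+ 2; set B := \sum_t g t ^+ 2; set C := \sum_t f t * g t.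
have B0 : 0 <= B by apply: sumr_ge0 => t _; exact: sqr_ge0.
have H : 0 <= \sum_t (B * f t - C * g t) ^+ 2 by apply: sumr_ge0 => t _; exact: sqr_ge0.
have E : \sum_t (B * f t - C * g t) ^+ 2 = B * (A * B - C ^+ 2).
  rewrite (eq_bigr (fun t => B^+2 * f t ^+ 2 - (2 * B * C) * (f t * g t) + C^+2 * g t ^+ 2)); last first.
    by move=> t _; ring.
  rewrite !big_split /= -!mulr_sumr -/A -/B -/C; rewrite sumrN -mulr_sumr -/C; ring.
rewrite E in H.
have [Bz|Bp] := eqVneq B 0.
  have g0 : forall t, g t = 0.
    move=> t; apply/eqP; rewrite -sqrf_eq0; apply/eqP.
    move/eqP: Bz; rewrite psumr_eq0 => [/allP/(_ t (mem_index_enum _))|]; last by move=> *; exact: sqr_ge0.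
    by move/implyP => /(_ isT)/eqP.
  have -> : C = 0 by rewrite /C big1 // => t _; rewrite g0 mulr0.
  by rewrite expr0n /= mulr_ge0 // sumr_ge0 // => t _; exact: sqr_ge0.
have Bpos : 0 < B by rewrite lt_def Bp B0.
by rewrite -subr_ge0; rewrite pmulr_rge0 in H.
Qed.

Lemma sqr_sum_le_card (T : finType) (f : T -> R) :
  (\sum_t f t) ^+ 2 <= #|T|%:R * \sum_t f t ^+ 2.
Proof.
have := CS (fun _ => 1) f.
under eq_bigr do rewrite mul1r.
under [X in _ <= X * _]eq_bigr do rewrite expr1n.
by rewrite sumr_const.
Qed.

Lemma sqrt_sum_tri (T : finType) (f g : T -> R) :
  Num.sqrt (\sum_t (f t + g t) ^+ 2) <=
  Num.sqrt (\sum_t f t ^+ 2) + Num.sqrt (\sum_t g t ^+ 2).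
Proof.
have A0 : 0 <= \sum_t f t ^+ 2 by apply: sumr_ge0 => t _; exact: sqr_ge0.
have B0 : 0 <= \sum_t g t ^+ 2 by apply: sumr_ge0 => t _; exact: sqr_ge0.
rewrite -(@ler_pXn2r _ 2) ?nnegrE ?addr_ge0 ?sqrtr_ge0 //.
rewrite sqr_sqrtr; last by apply: sumr_ge0 => t _; exact: sqr_ge0.
rewrite sqrrD !sqr_sqrtr //.
rewrite (eq_bigr (fun t => f t ^+ 2 + g t ^+ 2 + 2 * (f t * g t))); last by move=> t _; ring.
rewrite !big_split /= -mulr_sumr.
have : \sum_t f t * g t <= Num.sqrt (\sum_t f t ^+ 2) * Num.sqrt (\sum_t g t ^+ 2).
  rewrite -sqrtrM //; apply: le_trans (ler_norm _) _.
  by rewrite -sqrtr_sqr ler_sqrt ?mulr_ge0 // CS.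
rewrite mulr2n; lra.
Qed.




Lemma sumsq_diff (N : nat) (f : 'I_N -> R) :
  \sum_i \sum_j (f i - f j) ^+ 2 =
  2 * N%:R * \sum_i f i ^+ 2 - 2 * (\sum_i f i) ^+ 2.
Proof.
have E : forall i j, (f i - f j) ^+ 2 = f i ^+ 2 + f j ^+ 2 - 2 * (f i * f j) by move=> *; ring.
under eq_bigr do under eq_bigr do rewrite E.
have E1 : forall i, \sum_j (f i ^+ 2 + f j ^+ 2 - 2 * (f i * f j)) =
   f i ^+ 2 * N%:R + \sum_j f j ^+ 2 - 2 * (f i * \sum_j f j).
  move=> i; rewrite !big_split /= sumrN sumr_const card_ord -mulr_sumr -mulr_sumr.
  by rewrite mulr_natr.
under eq_bigr do rewrite E1.
rewrite !big_split /= sumrN sumr_const card_ord -mulr_suml -mulr_sumr -mulr_suml.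
rewrite -mulr_natr; ring.
Qed.

Lemma CS2 (I J : finType) (a b : I -> J -> R) :
  (\sum_i \sum_j a i j * b i j) ^+ 2 <=
  (\sum_i \sum_j a i j ^+ 2) * (\sum_i \sum_j b i j ^+ 2).
Proof.
rewrite !pair_bigA /=.
exact: (CS (fun p : I * J => a p.1 p.2) (fun p => b p.1 p.2)).
Qed.

Lemma contract (N : nat) (phi : 'I_N -> 'I_N -> R) (t E : R) (v : 'I_N -> R) :
  (0 < N)%N -> (forall i, \sum_j phi i j = 1) -> 0 <= t <= 1 -> 0 <= E ->
  \sum_i \sum_j (phi i j - N%:R^-1) ^+ 2 <= E ^+ 2 ->
  \sum_i \sum_j ((v i + t * \sum_k phi i k * (v k - v i)) -
                 (v j + t * \sum_k phi j k * (v k - v j))) ^+ 2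
  <= (1 - t * (1 - E)) ^+ 2 * \sum_i \sum_j (v i - v j) ^+ 2.
Proof.
move=> N0 phi1 /andP[t0 t1] E0 hE.
set n : R := N%:R.
have n0 : n != 0 by rewrite pnatr_eq0 -lt0n.
set vb := n^-1 * \sum_i v i.
set u := fun i => v i - vb.
set eps := fun i j => phi i j - n^-1.
set e := fun i => \sum_j eps i j * u j.
set g := fun i => (1 - t) * u i + t * e i.
have eps0 : forall i, \sum_j eps i j = 0.
  move=> i; rewrite /eps sumrB phi1 sumr_const card_ord -/n.
  by rewrite -mulr_natr mulVf // subrr.
have u0 : \sum_i u i = 0.
  rewrite /u sumrB sumr_const card_ord /vb -mulr_natl -/n mulrA mulfV // mul1r.
  by rewrite subrr.
have Hw : forall i, v i + t * \sum_k phi i k * (v k - v i) = g i + vb.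
  move=> i.
  have -> : \sum_k phi i k * (v k - v i) = \sum_k eps i k * u k + vb - v i.
    have -> : \sum_k phi i k * (v k - v i) = \sum_k phi i k * v k - v i.
      under eq_bigr do rewrite mulrBr.
      by rewrite sumrB -mulr_suml phi1 mul1r.
    congr (_ - _).
    have -> : \sum_k phi i k * v k = \sum_k (eps i k * u k + eps i k * vb + n^-1 * v k).
      apply: eq_bigr => k _; rewrite /eps /u; ring.
    rewrite !big_split /= -mulr_suml eps0 mul0r addr0 -mulr_sumr.
    by [].
  rewrite /g /u -/(e i); ring.
have Hd : forall i j, (v i + t * \sum_k phi i k * (v k - v i)) -
                 (v j + t * \sum_k phi j k * (v k - v j)) = g i - g j.
  by move=> i j; rewrite !Hw; ring.
under eq_bigr do under eq_bigr do rewrite Hd.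
have Hvu : forall i j, v i - v j = u i - u j by move=> i j; rewrite /u; ring.
under [X in _ <= _ * X]eq_bigr do under eq_bigr do rewrite Hvu.
rewrite !sumsq_diff u0 expr0n /= mulr0 subr0.
set U := \sum_i u i ^+ 2.
have U0 : 0 <= U by apply: sumr_ge0 => i _; exact: sqr_ge0.
have Hg : \sum_i g i ^+ 2 = (1 - t) ^+ 2 * U + 2 * t * (1 - t) * \sum_i u i * e i
                             + t ^+ 2 * \sum_i e i ^+ 2.
  rewrite /g (eq_bigr (fun i => (1 - t) ^+ 2 * u i ^+ 2 + 2 * t * (1 - t) * (u i * e i)
                             + t ^+ 2 * e i ^+ 2)); last by move=> i _; ring.
  by rewrite !big_split /= -!mulr_sumr.
have Hue : \sum_i u i * e i <= E * U.
  have -> : \sum_i u i * e i = \sum_i \sum_j eps i j * (u i * u j).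
    apply: eq_bigr => i _; rewrite /e mulr_sumr; apply: eq_bigr => j _; ring.
  have H := CS2 eps (fun i j => u i * u j).
  have E2 : \sum_i \sum_j (u i * u j) ^+ 2 = U ^+ 2.
    rewrite expr2 /U mulr_suml; apply: eq_bigr => i _; rewrite mulr_sumr.
    by apply: eq_bigr => j _; ring.
  rewrite E2 in H.
  apply: le_trans (ler_norm _) _.
  rewrite -(@ler_pXn2r _ 2) ?nnegrE ?mulr_ge0 // real_normK ?num_real //.
  apply: le_trans H _; rewrite exprMn ler_wpM2r ?exprn_ge0 //.
have He : \sum_i e i ^+ 2 <= E ^+ 2 * U.
  apply: le_trans (_ : \sum_i (\sum_j eps i j ^+ 2) * U <= _).
    by apply: ler_sum => i _; rewrite /e /U; exact: CS.
  by rewrite -mulr_suml ler_wpM2r.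
have Hg2 : \sum_i g i ^+ 2 <= (1 - t * (1 - E)) ^+ 2 * U.
  rewrite Hg.
  have tt : 0 <= 2 * t * (1 - t) by rewrite !mulr_ge0 // subr_ge0.
  apply: le_trans (_ : (1 - t) ^+ 2 * U + 2 * t * (1 - t) * (E * U) + t ^+ 2 * (E ^+ 2 * U) <= _).
    by rewrite lerD ?lerD2l ?ler_wpM2l ?exprn_ge0.
  by rewrite le_eqVlt; apply/orP; left; apply/eqP; ring.
apply: le_trans (_ : 2 * n * \sum_i g i ^+ 2 <= _).
  by rewrite lerBlDr lerDl mulr_ge0 // sqr_ge0.
have n0' : 0 <= 2 * n by rewrite mulr_ge0.
apply: le_trans (ler_wpM2l n0' Hg2) _.
by rewrite le_eqVlt; apply/orP; left; apply/eqP; ring.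
Qed.


Lemma sqr_ge0' (x : R) : 0 <= x ^+ 2. Proof. exact: sqr_ge0. Qed.
Hint Resolve sqr_ge0' : core.

Lemma sumsq_ge0 (T : finType) (f : T -> R) : 0 <= \sum_t f t ^+ 2.
Proof. by apply: sumr_ge0. Qed.

Lemma enorm_ge0 d (y : 'rV[R]_d) : 0 <= enorm y.
Proof. exact: sqrtr_ge0. Qed.

Lemma enorm_sq d (y : 'rV[R]_d) : enorm y ^+ 2 = \sum_k y ord0 k ^+ 2.
Proof. by rewrite /enorm sqr_sqrtr // sumsq_ge0. Qed.

Lemma enormD d (y z : 'rV[R]_d) : enorm (y + z) <= enorm y + enorm z.
Proof.
rewrite /enorm; under eq_bigr do rewrite mxE.
exact: sqrt_sum_tri.
Qed.

Lemma enormN d (y : 'rV[R]_d) : enorm (- y) = enorm y.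
Proof. by rewrite /enorm; under eq_bigr do rewrite mxE sqrrN. Qed.

Lemma enormZ d (c : R) (y : 'rV[R]_d) : enorm (c *: y) = `|c| * enorm y.
Proof.
rewrite /enorm; under eq_bigr do rewrite mxE exprMn.
by rewrite -mulr_sumr sqrtrM // sqrtr_sqr.
Qed.

Lemma enormB_sym d (y z : 'rV[R]_d) : enorm (y - z) = enorm (z - y).
Proof. by rewrite -enormN opprB. Qed.

Lemma enorm_rev d (p q r : 'rV[R]_d) :
  `|enorm (p - q) - enorm (p - r)| <= enorm (q - r).
Proof.
rewrite ler_norml; apply/andP; split.
- have : enorm (p - r) <= enorm (p - q) + enorm (q - r).
    by rewrite (_ : p - r = (p - q) + (q - r)) ?enormD // addrA subrK.
  lra.
- have : enorm (p - q) <= enorm (p - r) + enorm (r - q).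
    by rewrite (_ : p - q = (p - r) + (r - q)) ?enormD // addrA subrK.
  rewrite (enormB_sym r q); lra.
Qed.

Lemma DeltaF_ge0 N d (Y : 'I_N -> 'rV[R]_d) : 0 <= DeltaF Y.
Proof. exact: sqrtr_ge0. Qed.

Lemma DeltaF_sq N d (Y : 'I_N -> 'rV[R]_d) :
  DeltaF Y ^+ 2 = \sum_i \sum_j enorm (Y i - Y j) ^+ 2.
Proof. by rewrite /DeltaF sqr_sqrtr // sumr_ge0 // => i _; apply: sumr_ge0. Qed.

Lemma DeltaF_flat N d (Y : 'I_N -> 'rV[R]_d) :
  DeltaF Y = Num.sqrt (\sum_(p : 'I_N * 'I_N * 'I_d)
                         (Y p.1.1 ord0 p.2 - Y p.1.2 ord0 p.2) ^+ 2).
Proof.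
rewrite /DeltaF; congr Num.sqrt.
under eq_bigr do under eq_bigr do rewrite enorm_sq.
rewrite pair_bigA /= pair_bigA /=.
by apply: eq_bigr => p _; rewrite !mxE.
Qed.

Lemma DeltaF_step N d (X V : 'I_N -> 'rV[R]_d) (h : R) : 0 <= h ->
  DeltaF (fun i => X i + h *: V i) <= DeltaF X + h * DeltaF V.
Proof.
move=> h0; rewrite !DeltaF_flat.
have E : forall p : 'I_N * 'I_N * 'I_d,
   ((X p.1.1 + h *: V p.1.1) ord0 p.2 - (X p.1.2 + h *: V p.1.2) ord0 p.2) =
   (X p.1.1 ord0 p.2 - X p.1.2 ord0 p.2) + h * (V p.1.1 ord0 p.2 - V p.1.2 ord0 p.2).
  by move=> p; rewrite !mxE; ring.
under eq_bigr do rewrite E.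
apply: le_trans (sqrt_sum_tri _ _) _.
rewrite lerD2l.
under eq_bigr do rewrite exprMn.
by rewrite -mulr_sumr sqrtrM // sqrtr_sqr ger0_norm.
Qed.


Lemma sq_le (x y : R) : `|x| <= y -> x ^+ 2 <= y ^+ 2.
Proof.
move=> H; have y0 : 0 <= y by apply: le_trans H.
by rewrite -real_normK ?num_real // ler_pXn2r ?nnegrE.
Qed.

Lemma phi_props N d (a : R -> R) c1 c2 La (X : 'I_N -> 'rV[R]_d) :
  (0 < N)%N -> 0 < c1 -> 0 <= La ->
  (forall r, 0 <= r -> c1 <= a r <= c2) ->
  (forall r1 r2, 0 <= r1 -> 0 <= r2 -> `|a r1 - a r2| <= La * `|r1 - r2|) ->
  [/\ forall i, \sum_j mt_phi a X i j = 1,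
      forall i j, 0 <= mt_phi a X i j <= 1 &
      \sum_i \sum_j (mt_phi a X i j - N%:R^-1) ^+ 2
        <= (La / (N%:R * c1) * DeltaF X) ^+ 2].
Proof.
move=> N0 c10 La0 ha hL.
set n : R := N%:R.
have n0 : 0 < n by rewrite ltr0n.
have aij : forall i j, c1 <= a (enorm (X i - X j)) by move=> i j; case/andP: (ha _ (enorm_ge0 (X i - X j))).
have Sge : forall i, n * c1 <= \sum_k a (enorm (X i - X k)).
  move=> i; apply: le_trans (_ : \sum_(k < N) c1 <= _); last by apply: ler_sum => k _.
  by rewrite sumr_const card_ord mulr_natl.
have Spos : forall i, 0 < \sum_k a (enorm (X i - X k)).
  by move=> i; apply: lt_le_trans (Sge i); rewrite mulr_gt0.
split.
- move=> i; rewrite /mt_phi -mulr_suml mulfV //; exact: lt0r_neq0.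
- move=> i j; rewrite /mt_phi; apply/andP; split.
    apply: divr_ge0; [exact: le_trans (ltW c10) (aij i j) | exact: ltW].
  rewrite ler_pdivrMr // mul1r.
  rewrite (bigD1 j) //= lerDl sumr_ge0 // => k _.
  by apply: le_trans (ltW c10) _.
have key : forall i j, (mt_phi a X i j - n^-1) ^+ 2 <=
    (La / (n * n * c1)) ^+ 2 * (n * \sum_k enorm (X j - X k) ^+ 2).
  move=> i j.
  set S := \sum_k a (enorm (X i - X k)).
  have S0 := Spos i.
  have Eq : mt_phi a X i j - n^-1 =
      (\sum_k (a (enorm (X i - X j)) - a (enorm (X i - X k)))) / (n * S).
    rewrite sumrB sumr_const card_ord -/S /mt_phi -/S.
    rewrite -mulr_natr -/n; field.
    by rewrite lt0r_neq0 // lt0r_neq0.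
  rewrite Eq.
  have B1 : `|\sum_k (a (enorm (X i - X j)) - a (enorm (X i - X k)))| <=
            La * \sum_k enorm (X j - X k).
    apply: le_trans (ler_norm_sum _ _ _) _.
    rewrite mulr_sumr; apply: ler_sum => k _.
    apply: le_trans (hL _ _ (enorm_ge0 _) (enorm_ge0 _)) _.
    by rewrite ler_wpM2l // enorm_rev.
  have T0 : 0 <= \sum_k enorm (X j - X k) by apply: sumr_ge0 => k _; exact: enorm_ge0.
  apply: le_trans (_ : (La / (n * n * c1) * \sum_k enorm (X j - X k)) ^+ 2 <= _).
    apply: sq_le.
    rewrite normrM normfV (ger0_norm (ltW (mulr_gt0 n0 S0))).
    rewrite ler_pdivrMr ?mulr_gt0 //.
    apply: le_trans B1 _.
    set T := \sum_k enorm (X j - X k).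
    have -> : La / (n * n * c1) * T * (n * S) = La * T * (S / (n * c1)).
      by field; rewrite !lt0r_neq0.
    rewrite -{1}(mulr1 (La * T)) ler_wpM2l ?mulr_ge0 //.
    by rewrite ler_pdivlMr ?mulr_gt0 // mul1r; exact: Sge.
  rewrite exprMn ler_wpM2l //.
  have := sqr_sum_le_card (fun k => enorm (X j - X k)).
  by rewrite card_ord.
apply: le_trans (_ : \sum_(i < N) \sum_(j < N) (La / (n * n * c1)) ^+ 2 *
                     (n * \sum_k enorm (X j - X k) ^+ 2) <= _).
  by apply: ler_sum => i _; apply: ler_sum => j _; exact: key.
rewrite sumr_const card_ord -mulr_natl -/n -mulr_sumr -mulr_sumr.
rewrite [(La / (n * c1) * _) ^+ 2]exprMn DeltaF_sq.
set T := \sum_j \sum_k _.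
have -> : (La / (n * n * c1)) ^+ 2 = (La / (n * c1)) ^+ 2 / (n * n).
  field; rewrite !lt0r_neq0 //.
rewrite le_eqVlt; apply/orP; left; apply/eqP.
by field; rewrite -/n !lt0r_neq0.
Qed.


Lemma DeltaF_sqk N d (Y : 'I_N -> 'rV[R]_d) :
  DeltaF Y ^+ 2 = \sum_k \sum_i \sum_j (Y i ord0 k - Y j ord0 k) ^+ 2.
Proof.
rewrite DeltaF_sq.
under eq_bigr do under eq_bigr do rewrite enorm_sq.
under eq_bigr do rewrite exchange_big /=.
rewrite exchange_big /=; apply: eq_bigr => k _.
apply: eq_bigr => i _; apply: eq_bigr => j _.
by rewrite !mxE.
Qed.

Lemma v_step N d (a : R -> R) c1 c2 La (X V : 'I_N -> 'rV[R]_d) t :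
  (0 < N)%N -> 0 < c1 -> 0 <= La ->
  (forall r, 0 <= r -> c1 <= a r <= c2) ->
  (forall r1 r2, 0 <= r1 -> 0 <= r2 -> `|a r1 - a r2| <= La * `|r1 - r2|) ->
  0 <= t <= 1 ->
  DeltaF (fun i => V i + t *: \sum_j mt_phi a X i j *: (V j - V i))
    <= (1 - t * (1 - La / (N%:R * c1) * DeltaF X)) * DeltaF V.
Proof.
move=> N0 c10 La0 ha hL /andP[t0 t1].
have [p1 _ p3] := phi_props X N0 c10 La0 ha hL.
set E := La / (N%:R * c1) * DeltaF X.
have E0 : 0 <= E by rewrite mulr_ge0 ?DeltaF_ge0 // divr_ge0 // mulr_ge0 // ltW.
have c0 : 0 <= 1 - t * (1 - E).
  have : t * (1 - E) <= t * 1 by rewrite ler_wpM2l // lerBlDr lerDl.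
  rewrite mulr1; lra.
rewrite -(@ler_pXn2r _ 2) ?nnegrE ?mulr_ge0 ?DeltaF_ge0 //.
rewrite exprMn !DeltaF_sqk mulr_sumr; apply: ler_sum => k _.
have H := @contract N (mt_phi a X) t E (fun i => V i ord0 k) N0 p1.
rewrite t0 t1 E0 p3 in H.
apply: le_trans (H isT isT isT).
rewrite le_eqVlt; apply/orP; left; apply/eqP.
apply: eq_bigr => i _; apply: eq_bigr => j _.
rewrite !mxE !summxE; congr ((_ + _ * _ - (_ + _ * _)) ^+ 2); apply: eq_bigr => l _; by rewrite !mxE.
Qed.


Lemma incr_bound N d (a : R -> R) c1 c2 La (X V : 'I_N -> 'rV[R]_d) i :
  (0 < N)%N -> 0 < c1 -> 0 <= La ->
  (forall r, 0 <= r -> c1 <= a r <= c2) ->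
  (forall r1 r2, 0 <= r1 -> 0 <= r2 -> `|a r1 - a r2| <= La * `|r1 - r2|) ->
  enorm (\sum_j mt_phi a X i j *: (V j - V i)) <= DeltaF V.
Proof.
move=> N0 c10 La0 ha hL.
have [p1 p2 _] := phi_props X N0 c10 La0 ha hL.
rewrite -(@ler_pXn2r _ 2) ?nnegrE ?enorm_ge0 ?DeltaF_ge0 //.
rewrite enorm_sq DeltaF_sqk; apply: ler_sum => k _.
rewrite summxE.
under eq_bigr do rewrite !mxE.
apply: le_trans (CS _ _) _.
have s1 : \sum_j mt_phi a X i j ^+ 2 <= 1.
  rewrite -(p1 i); apply: ler_sum => j _.
  have /andP[h0 h1] := p2 i j.
  move: h0 h1; set z := mt_phi a X i j => h0 h1; nra.
apply: le_trans (_ : 1 * \sum_j (V j ord0 k - V i ord0 k) ^+ 2 <= _).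
  by rewrite ler_wpM2r // sumsq_ge0.
rewrite mul1r [X in _ <= X](bigD1 i) //=.
apply: le_trans (_ : \sum_j (V i ord0 k - V j ord0 k) ^+ 2 + 0 <= _).
  rewrite addr0; apply: ler_sum => j _; by rewrite -sqrrN opprB.
by rewrite lerD2l; apply: sumr_ge0 => i' _; apply: sumr_ge0.
Qed.

Lemma int_bound (A B k : R) : 0 <= A -> A <= B -> 0 <= k ->
  Rintegral lebesgue_measure `[A, B] (fun s => 1 - k * s) <= B - A.
Proof.
move=> A0 AB k0.
have cont : forall c, continuous (fun s : R => 1 - c * s).
  move=> c x; apply: cvgB; first exact: cvg_cst.
  by apply: cvgMr; exact: cvg_id.
have mI : measurable (`[A, B] : set R) by exact: measurable_itv.
apply: le_trans (_ : Rintegral lebesgue_measure `[A, B] (fun s => 1 - 0 * s) <= _).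
  apply: le_Rintegral => //.
  - apply: continuous_compact_integrable; first exact: segment_compact.
    by apply: continuous_subspaceT; exact: cont.
  - apply: continuous_compact_integrable; first exact: segment_compact.
    by apply: continuous_subspaceT; exact: cont.
  move=> x /=; rewrite in_itv /= => /andP[Ax xB].
  rewrite mul0r subr0 lerBlDr lerDl mulr_ge0 //; exact: le_trans Ax.
under eq_Rintegral do rewrite mul0r subr0.
rewrite Rintegral_cst // mul1r.
have := @lebesgue_measure_itv R `[A, B]; rewrite /= => ->.
case: ifP => _ /=; last by rewrite subr_ge0.
by [].
Qed.


Lemma geo_le (q : R) n : 0 <= q -> q < 1 -> (\sum_(m < n) q ^+ m) * (1 - q) <= 1.
Proof.
move=> q0 q1.
have -> : (\sum_(m < n) q ^+ m) * (1 - q) = 1 - q ^+ n.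
  elim: n => [|n IH]; first by rewrite big_ord0 mul0r expr0 subrr.
  by rewrite big_ord_recr /= mulrDl IH exprS; ring.
by rewrite lerBlDr lerDl exprn_ge0.
Qed.

Lemma coord_le_mx d (y : 'rV[R]_d) k : `|y ord0 k| <= `|y|.
Proof.
rewrite [X in _ <= X]/Num.Def.normr /= mx_normrE.
exact: (le_bigmax _ (fun ij : 'I_1 * 'I_d => `|y ij.1 ij.2|) (ord0, k)).
Qed.

Lemma mx_le_enorm d (y : 'rV[R]_d) : `|y| <= enorm y.
Proof.
rewrite [X in X <= _]/Num.Def.normr /= mx_normrE.
apply: bigmax_le => [|ij _]; first exact: enorm_ge0.
rewrite (ord1 ij.1).
rewrite -(@ler_pXn2r _ 2) ?nnegrE ?enorm_ge0 // enorm_sq real_normK ?num_real //.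
by rewrite (bigD1 ij.2) //= lerDl sumr_ge0.
Qed.

Lemma enorm_le_mx d (y : 'rV[R]_d) : enorm y <= Num.sqrt d%:R * `|y|.
Proof.
rewrite /enorm.
have -> : Num.sqrt d%:R * `|y| = Num.sqrt (d%:R * `|y| ^+ 2).
  by rewrite sqrtrM ?ler0n // sqrtr_sqr normr_id.
rewrite ler_sqrt ?mulr_ge0 //.
apply: le_trans (_ : \sum_(k < d) `|y| ^+ 2 <= _).
  apply: ler_sum => k _; rewrite -real_normK ?num_real //.
  by rewrite ler_pXn2r ?nnegrE // coord_le_mx.
by rewrite sumr_const card_ord mulr_natl.
Qed.

End Aux.
Unset Implicit Arguments.
Set Strict Implicit.


Theorem corollary3p5 (R : realType) (N d : nat) (kappa c1 c2 La C : R)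
  (a : R -> R) (X0 V0 : 'I_N -> 'rV[R]_d) :
  (0 < N)%N -> (0 < d)%N -> 0 < kappa ->
  0 < c1 -> c1 <= c2 -> 0 < La ->
  (forall r, 0 <= r -> c1 <= a r <= c2) ->
  (forall r1 r2, 0 <= r1 -> 0 <= r2 -> `|a r1 - a r2| <= La * `|r1 - r2|) ->
  DeltaF X0 < Mconst N c1 c2 La ->
  DeltaF V0 < kappa * Rintegral lebesgue_measure
                        `[DeltaF X0, Mconst N c1 c2 La]
                        (psi N c1 c2 La) ->
  0 < C < 1 ->
  exists h0 : R, 0 < h0 /\
    forall h : R, 0 < h -> h < h0 -> h < 1 -> h < kappa^-1 ->
    forall x v : nat -> 'I_N -> 'rV[R]_d,
      x 0%N = X0 -> v 0%N = V0 -> is_MT_solution a kappa h x v ->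
      forall i : 'I_N, exists vinf : 'rV[R]_d,
        (v^~ i @ \oo --> vinf) /\
        forall n : nat,
          enorm (vinf - v n i) <=
            h * kappa * Num.sqrt N%:R * DeltaF V0
              * expR (- (C * kappa * psi N c1 c2 La (Mconst N c1 c2 La) * h * n%:R))
              / (1 - expR (- (C * kappa * psi N c1 c2 La (Mconst N c1 c2 La) * h))).
Proof.
move=> N0 d0 k0 c10 c12 La0 ha hL hX hV /andP[C0 C1].
set n := N%:R.
have n1 : 1 <= n by rewrite ler1n.
have nn0 : 0 < n by lra.
set beta := La / (n * c1).
have beta0 : 0 < beta by rewrite divr_gt0 // mulr_gt0.
set g := 1 + c2 / c1.
have g2 : 2 <= g.
  have : 1 <= c2 / c1 by rewrite ler_pdivlMr // mul1r.
  rewrite /g; lra.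
have g0 : 0 < g by lra.
have PE : phiLip N c1 c2 La = beta * g by [].
set M := Mconst N c1 c2 La.
have ME : M = 1 / (4 * n * (beta * g)) by rewrite /M /Mconst PE.
have M0 : 0 < M.
  rewrite ME; apply: divr_gt0 => //.
  have : 0 < beta * g by exact: mulr_gt0.
  nra.
have bM : beta * M <= 1 / 8.
  have -> : beta * M = 1 / (4 * n * g).
    rewrite ME; field; apply/and3P; split; rewrite ?lt0r_neq0 // ltr0n.
  rewrite ler_pdivrMr ?mulr_gt0 //.
  have : 2 <= n * g by nra.
  lra.
have psiM : psi N c1 c2 La M = 3 / 4.
  rewrite /psi PE ME -/n; field; apply/and3P; split; rewrite ?lt0r_neq0 // ltr0n.
set Dx0 := DeltaF X0.
set Dv0 := DeltaF V0.
have Dx00 : 0 <= Dx0 by exact: DeltaF_ge0.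
have Dv00 : 0 <= Dv0 by exact: DeltaF_ge0.
have hI : Dv0 <= kappa * (M - Dx0).
  apply: (le_trans (ltW hV)); apply: ler_wpM2l; first exact: ltW.
  rewrite (_ : psi N c1 c2 La = fun s => 1 - (phiLip N c1 c2 La * n) * s) //.
  apply: int_bound => //; first exact: ltW.
  by rewrite PE; apply: mulr_ge0; [apply: mulr_ge0|]; apply: ltW.
exists (2 * kappa)^-1; split; first by rewrite invr_gt0 mulr_gt0.
move=> h h0 hh0 h1 hk x v ex0 ev0 hsol i.
set t := h * kappa.
have t0 : 0 < t by rewrite mulr_gt0.
have t12 : t < 1 / 2.
  have : h * kappa < (2 * kappa)^-1 * kappa by rewrite ltr_pM2r.
  have -> : (2 * kappa)^-1 * kappa = 1 / 2 by field; rewrite lt0r_neq0.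
  done.
set r := 3 / 4 * t.
have r0 : 0 < r by rewrite /r; lra.
set q := expR (- r).
have q0 : 0 < q by exact: expR_gt0.
have q1 : q < 1 by rewrite /q expR_lt1 oppr_lt0.
have qr : 1 - r <= q by have := expR_ge1Dx (- r); rewrite /q; lra.
have qr2 : q * (1 + r) <= 1.
  rewrite /q expRN ler_pdivrMl ?expR_gt0 // mulr1.
  exact: expR_ge1Dx.
have hvx : forall m, v m.+1 = fun j => v m j + t *: \sum_l mt_phi a (x m) j l *: (v m l - v m j).
  by move=> m; apply: funext => j; case: (hsol m j).
have hxx : forall m, x m.+1 = fun j => x m j + h *: v m j.
  by move=> m; apply: funext => j; case: (hsol m j).
have main : forall m, DeltaF (v m) <= Dv0 * q ^+ m /\
    DeltaF (x m) <= Dx0 + h * Dv0 * \sum_(l < m) q ^+ l.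
  elim => [|m [IHv IHx]].
    by rewrite ev0 ex0 expr0 mulr1 big_ord0 mulr0 addr0.
  set G := \sum_(l < m) q ^+ l.
  rewrite -/G in IHx.
  have G0 : 0 <= G by apply: sumr_ge0 => l _; rewrite exprn_ge0 // ltW.
  have Gq : G * (1 - q) <= 1 := geo_le m (ltW q0) q1.
  have Gr : G * r <= 1 + r.
    have : G * r <= G * ((1 - q) * (1 + r)) by rewrite ler_wpM2l //; nra.
    have : G * (1 - q) * (1 + r) <= 1 + r by nra.
    rewrite -/G; lra.
  have hG : h * Dv0 * G <= 11 / 6 * (M - Dx0).
    have e1 : kappa * (h * G) <= 4 / 3 * (1 + r).
      move: Gr; rewrite /r /t; nra.
    have e2 : kappa * (h * Dv0 * G) <= kappa * (4 / 3 * (1 + r) * (M - Dx0)).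
      have : Dv0 * (kappa * (h * G)) <= Dv0 * (4 / 3 * (1 + r)) by rewrite ler_wpM2l.
      have : 4 / 3 * (1 + r) * Dv0 <= 4 / 3 * (1 + r) * (kappa * (M - Dx0)).
        by rewrite ler_wpM2l //; lra.
      nra.
    have e3 : h * Dv0 * G <= 4 / 3 * (1 + r) * (M - Dx0).
      by move: e2; rewrite ler_pM2l.
    have : M - Dx0 >= 0 by rewrite subr_ge0 ltW.
    have : r <= 3 / 8 by rewrite /r; lra.
    nra.
  have Ex : beta * DeltaF (x m) <= 1 / 4.
    have : DeltaF (x m) <= 11 / 6 * M by lra.
    move=> H; apply: le_trans (_ : beta * (11 / 6 * M) <= _).
      by rewrite ler_wpM2l // ltW.
    lra.
  split.
  - rewrite hvx.
    apply: le_trans (v_step (x m) (v m) N0 c10 (ltW La0) ha hL _) _.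
      by rewrite (ltW t0) /=; lra.
    rewrite -/n -/beta exprS.
    have Ex0 : 0 <= beta * DeltaF (x m) by rewrite mulr_ge0 // ?DeltaF_ge0 // ltW.
    have f0 : 0 <= 1 - t * (1 - beta * DeltaF (x m)) by nra.
    have f1 : 1 - t * (1 - beta * DeltaF (x m)) <= q by rewrite /r in qr; nra.
    apply: le_trans (ler_wpM2l f0 IHv) _.
    rewrite mulrCA; apply: ler_wpM2l => //; apply: ler_wpM2r => //.
    by rewrite exprn_ge0 // ltW.
  - rewrite hxx.
    apply: le_trans (DeltaF_step (x m) (v m) (ltW h0)) _.
    rewrite big_ord_recr /= -/G.
    have : h * DeltaF (v m) <= h * (Dv0 * q ^+ m) by rewrite ler_wpM2l // ltW.
    lra.
have incr : forall m, enorm (v m.+1 i - v m i) <= t * Dv0 * q ^+ m.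
  move=> m; rewrite hvx /= (addrC (v m i)) addrK enormZ (ger0_norm (ltW t0)).
  rewrite -mulrA; apply: ler_wpM2l; first exact: ltW.
  apply: le_trans (incr_bound (x m) (v m) i N0 c10 (ltW La0) ha hL) _.
  by case: (main m).
have enorm0 : enorm (0 : 'rV[R]_d) = 0.
  by rewrite -(scale0r 0) enormZ normr0 mul0r.
have tail : forall m p, enorm (v (m + p)%N i - v m i) <=
    t * Dv0 * q ^+ m * \sum_(l < p) q ^+ l.
  move=> m; elim => [|p IH].
    by rewrite addn0 subrr enorm0 big_ord0 mulr0.
  rewrite addnS big_ord_recr /= mulrDr.
  rewrite (_ : v (m + p).+1 i - v m i =
     (v (m + p).+1 i - v (m + p)%N i) + (v (m + p)%N i - v m i)); last first.
    by rewrite addrA subrK.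
  apply: le_trans (enormD _ _) _.
  rewrite addrC lerD // -mulrA -exprD.
  exact: incr.
have Gb : forall p, \sum_(l < p) q ^+ l <= (1 - q)^-1.
  move=> p; rewrite -[X in _ <= X]mul1r ler_pdivlMr ?subr_gt0 //.
  exact: geo_le (ltW q0) q1.
have tail2 : forall m p, enorm (v (m + p)%N i - v m i) <= t * Dv0 * q ^+ m / (1 - q).
  move=> m p; apply: le_trans (tail m p) _.
  apply: ler_wpM2l => //; apply: mulr_ge0; last by rewrite exprn_ge0 // ltW.
  by apply: mulr_ge0 => //; exact: ltW.
rewrite psiM.
set qC := expR (- (C * kappa * (3 / 4) * h)).
have qqC : q <= qC.
  rewrite /q /qC ler_expR lerN2 /r /t.
  have : 0 < h * kappa by rewrite mulr_gt0.
  nra.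
have qC1 : qC < 1.
  rewrite /qC expR_lt1 oppr_lt0 !mulr_gt0 //.
have qC0 : 0 < qC by exact: expR_gt0.
have sn : 1 <= Num.sqrt n by rewrite -sqrtr1 ler_sqrt //; lra.
have Tb : forall m, t * Dv0 * q ^+ m / (1 - q) <=
    h * kappa * Num.sqrt n * Dv0 * expR (- (C * kappa * (3 / 4) * h * m%:R)) /
    (1 - qC).
  move=> m.
  have -> : expR (- (C * kappa * (3 / 4) * h * m%:R)) = qC ^+ m.
    by rewrite /qC -expRM_natl; congr expR; ring.
  apply: ler_pM.
  - by rewrite !mulr_ge0 // ?exprn_ge0 // ltW.
  - by rewrite invr_ge0 subr_ge0 ltW.
  - apply: ler_pM.
    + by rewrite mulr_ge0 // ltW.
    + by rewrite exprn_ge0 // ltW.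
    + rewrite -/t; have : 0 <= t * Dv0 by rewrite mulr_ge0 // ltW.
      nra.
    + by apply: lerXn2r => //; rewrite nnegrE ltW.
  - rewrite lef_pV2 ?posrE ?subr_gt0 //; lra.
set K := t * Dv0 / (1 - q).
have K0 : 0 <= K by rewrite divr_ge0 ?subr_ge0 ?mulr_ge0 // ltW.
have cauchy : cauchy_ex (v^~ i @ \oo).
  move=> e e0.
  have qlim : (fun m => q ^+ m) @ \oo --> (0 : R).
    by apply: cvg_expr; rewrite ger0_norm // ltW.
  have e' : 0 < e / (K + 1) by rewrite divr_gt0 //; lra.
  have [m0 _ Hn0] := proj1 (cvgr0Pnorm_lt _) qlim _ e'.
  exists (v m0 i); exists m0 => // m /= Hm.
  rewrite -ball_normE /ball_ /=.
  have H0 : `|q ^+ m0| < e / (K + 1) by exact: (Hn0 m0 (leqnn m0)).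
  rewrite ger0_norm ?exprn_ge0 ?ltW // in H0.
  apply: le_lt_trans (mx_le_enorm _) _.
  rewrite enormB_sym -(subnKC Hm).
  apply: le_lt_trans (tail2 m0 (m - m0)%N) _.
  have -> : t * Dv0 * q ^+ m0 / (1 - q) = K * q ^+ m0.
    by rewrite /K; field; rewrite subr_eq0 gt_eqF.
  move: H0; rewrite ltr_pdivlMr; last lra.
  have : 0 <= q ^+ m0 by rewrite exprn_ge0 // ltW.
  nra.
have cv : cvgn (v^~ i) by apply: cauchy_cvg; apply: cauchy_exP; exact: cauchy.
exists (lim (v^~ i @ \oo)); split; first exact: cv.
move=> m; set vinf := lim _.
apply/ler_addgt0Pr => del del0.
pose c : R := Num.sqrt (d%:R : R) + 1.
have c0 : 0 < c by rewrite /c; have := sqrtr_ge0 (d%:R : R); lra.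
have [m1 _ Hn1] := proj1 (cvgrPdist_lt _ _) cv (del / c) (divr_gt0 del0 c0).
set p := maxn m m1.
have Hp : `|vinf - v p i| < del / c by exact: (Hn1 p (leq_maxr m m1)).
have e1 : enorm (vinf - v p i) <= del.
  apply: le_trans (enorm_le_mx _) _.
  apply: le_trans (_ : c * `|vinf - v p i| <= _).
    by rewrite ler_wpM2r // /c lerDl.
  by rewrite -ler_pdivlMl // mulrC ltW.
have e2 : enorm (v p i - v m i) <=
    h * kappa * Num.sqrt n * Dv0 * expR (- (C * kappa * (3 / 4) * h * m%:R)) / (1 - qC).
  rewrite /p -(subnKC (leq_maxl m m1)).
  exact: le_trans (tail2 m _) (Tb m).
rewrite (_ : vinf - v m i = (vinf - v p i) + (v p i - v m i)); last by rewrite addrA subrK.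
apply: le_trans (enormD _ _) _.
rewrite -/t in e2; lra.
Qed.
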